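(* Let $\mathbf{L}$ be a Euclidean modal logic such that $\mathtt{S}_{\mathbf{L}}\setminus\big((\{1\}\times\mathbf{N}^{-})\cup(\mathbf{N}^{+}\times\{-1,0,1\})\big)$ is finite. Let $\varphi$ be a modal formula with $\mathbf{L}=\mathbf{K5}\oplus\varphi$. Let $k$ be the least integer such that $k\ge4$ and for all $m\in\mathbf{N}^{+}$, $n\in\mathbf{N}^{-}$, if $(m,n)\in\mathtt{S}_{\mathbf{L}}\setminus\big((\{1\}\times\mathbf{N}^{-})\cup(\mathbf{N}^{+}\times\{-1,0,1\})\big)$ then $m+n\le k$. Then for every first-order sentence $A$ and every individual variable $\mathbf{x}$ not occurring in $A$, the following are equivalent: (1) $A$ is modally definable in $\mathtt{Fr}(\mathbf{L})$; (2) $A\leftrightarrow\forall\mathbf{x}\,\tau(\mathbf{x},A)$ belongs to $\mathtt{Th}(\mathtt{Fr}(\mathbf{L}))$, and for all $m,m'\in\mathbf{N}^{+}$ and $n,n'\in\mathbf{N}^{-}$, if $\varphi$ is valid in $\mathcal{F}_m^n$, $(m,n)\in\Pi_k^A$, $m'\le m$, $n'\le n$ and $\mathcal{F}_m^n\models A$, then $\mathcal{F}_{m'}^{n'}\models A$.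
   Context: A frame is a pair $(W,R)$ with $W$ non-empty and $R\subseteq W\times W$; Euclidean means $sRt$ and $sRu$ imply $tRu$ and $uRt$. Modal formulas (propositional variables, $\bot,\neg,\vee,\Box$) have standard Kripke semantics; validity in a frame means truth at all points under all valuations. A (normal) modal logic contains all tautologies and K axioms and is closed under uniform substitution, modus ponens and necessitation; a Euclidean modal logic is one not containing $\bot$ and containing $\Diamond\psi\to\Box\Diamond\psi$ for all $\psi$; $\mathbf{K5}$ is the least modal logic containing all $\Diamond\psi\to\Box\Diamond\psi$ and $\mathbf{K5}\oplus\varphi$ the least modal logic containing $\mathbf{K5}$ and $\varphi$. $\mathtt{Fr}(\mathbf{L})$ is the class of frames validating $\mathbf{L}$; $\mathtt{Th}(\mathcal{C})$ is the set of first-order sentences valid in all frames of $\mathcal{C}$. First-order formulas are built from atoms $\mathbf{R}(\mathbf{y},\mathbf{z})$, $\mathbf{y}=\mathbf{z}$ with $\neg,\vee,\forall$ (other connectives and $\exists$ are abbreviations). A sentence $A$ is modally definable in a class $\mathcal{C}$ if there is a modal formula $\psi$ with $\mathcal{F}\models\psi\iff\mathcal{F}\models A$ for all $\mathcal{F}\in\mathcal{C}$. The rooted translation $\tau(\mathbf{x},\cdot)$ (for $\mathbf{x}$ not occurring in the formula) is defined by: $\tau(\mathbf{x},\mathbf{R}(\mathbf{y},\mathbf{z}))=\mathbf{R}(\mathbf{y},\mathbf{z})$; $\tau(\mathbf{x},\mathbf{y}=\mathbf{z})=(\mathbf{y}=\mathbf{z})$; $\tau(\mathbf{x},\neg B)=\neg\tau(\mathbf{x},B)$;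 $\tau(\mathbf{x},B\vee C)=\tau(\mathbf{x},B)\vee\tau(\mathbf{x},C)$; $\tau(\mathbf{x},\forall\mathbf{y}B)=\forall\mathbf{y}\big((\mathbf{x}=\mathbf{y}\vee\exists\mathbf{z}(\mathbf{R}(\mathbf{x},\mathbf{z})\wedge\mathbf{R}(\mathbf{z},\mathbf{y})))\to\tau(\mathbf{x},B)\big)$. Let $\mathtt{qdd}(A)=\max\{\mathtt{qd}(A),3\}$ with $\mathtt{qd}$ the quantifier depth. For $k\ge4$, $\Pi_k^A$ is the set of $(m,n)\in\mathbf{N}^{+}\times\mathbf{N}^{-}$ such that: if $m\ge2$ and $n\ge2$ then $m+n\le k$; if $m=1$ then $n\le\mathtt{qdd}(A)$; and if $n\in\{-1,0,1\}$ then $m\le\mathtt{qdd}(A)$. $\mathbf{N}^{+}=\{1,2,\dots\}$, $\mathbf{N}^{-}=\{-1,0,1,\dots\}$. For $m\in\mathbf{N}^{+}$, $n\ge0$, the flower $\mathcal{F}_m^n$ has universe $\{0,\dots,m+n\}$ and relation $(\{0\}\times\{1,\dots,m\})\cup\{1,\dots,m+n\}^2$; $\mathcal{F}_m^{-1}$ has universe $\{1,\dots,m\}$ and relation $\{1,\dots,m\}^2$. $\mathtt{S}_{\mathbf{L}}=\{(m,n)\in\mathbf{N}^{+}\times\mathbf{N}^{-}:\ \mathbf{L}\text{ valid in }\mathcal{F}_m^n\}$. *)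

(* Defs.v *)
From Stdlib Require Import ZArith List Arith Lia.
Open Scope Z_scope.

Record frame := mkFrame { world : Type; rel : world -> world -> Prop }.

Inductive mform : Type :=
| MVar : nat -> mform
| MBot : mform
| MNeg : mform -> mform
| MOr : mform -> mform -> mform
| MBox : mform -> mform.

Definition MImp (a b : mform) : mform := MOr (MNeg a) b.
Definition MDia (a : mform) : mform := MNeg (MBox (MNeg a)).

Fixpoint msat (F : frame) (V : nat -> world F -> Prop) (w : world F) (f : mform)
  : Prop :=
  match f with
  | MVar p => V p w
  | MBot => False
  | MNeg g => ~ msat F V w g
  | MOr g h => msat F V w g \/ msat F V w h
  | MBox g => forall v, rel F w v -> msat F V v g
  end.

Definition mvalid (F : frame) (f : mform) : Prop :=
  forall (V : nat -> world F -> Prop) (w : world F), msat F V w f.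

(* propositional evaluation treating variables and boxed formulas as atoms;
   tautologies = substitution instances of classical tautologies *)
Fixpoint peval (v : mform -> bool) (f : mform) : bool :=
  match f with
  | MVar p => v (MVar p)
  | MBot => false
  | MNeg g => negb (peval v g)
  | MOr g h => peval v g || peval v h
  | MBox g => v (MBox g)
  end.

Definition tautology (f : mform) : Prop := forall v, peval v f = true.

Fixpoint msubst (s : nat -> mform) (f : mform) : mform :=
  match f with
  | MVar p => s p
  | MBot => MBot
  | MNeg g => MNeg (msubst s g)
  | MOr g h => MOr (msubst s g) (msubst s h)
  | MBox g => MBox (msubst s g)
  end.

Definition Kax (a b : mform) : mform :=
  MImp (MBox (MImp a b)) (MImp (MBox a) (MBox b)).

Definition modal_logic (L : mform -> Prop) : Prop :=
  (forall f, tautology f -> L f) /\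
  (forall a b, L (Kax a b)) /\
  (forall s f, L f -> L (msubst s f)) /\
  (forall a b, L (MImp a b) -> L a -> L b) /\
  (forall a, L a -> L (MBox a)).

Definition ax5 (psi : mform) : mform := MImp (MDia psi) (MBox (MDia psi)).

Definition euclidean_logic (L : mform -> Prop) : Prop :=
  modal_logic L /\ ~ L MBot /\ (forall psi, L (ax5 psi)).

Definition K5plus (phi : mform) (f : mform) : Prop :=
  forall L : mform -> Prop, modal_logic L -> (forall psi, L (ax5 psi)) -> L phi -> L f.

Definition FrL (L : mform -> Prop) (F : frame) : Prop :=
  inhabited (world F) /\ forall f, L f -> mvalid F f.

Definition flower_pos (m n : nat) : frame :=
  {| world := { i : nat | (i <= m + n)%nat };
     rel := fun a b =>
       (proj1_sig a = 0%nat /\ (1 <= proj1_sig b <= m)%nat) \/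
       ((1 <= proj1_sig a <= m + n)%nat /\ (1 <= proj1_sig b <= m + n)%nat) |}.

Definition cluster (m : nat) : frame :=
  {| world := { i : nat | (1 <= i <= m)%nat }; rel := fun _ _ => True |}.

(* used only for n >= -1 *)
Definition flower (m : nat) (n : Z) : frame :=
  if n <? 0 then cluster m else flower_pos m (Z.to_nat n).

(* S_L, with m in N^+ and n in N^- = {-1,0,1,...} *)
Definition S_L (L : mform -> Prop) (m : nat) (n : Z) : Prop :=
  (1 <= m)%nat /\ -1 <= n /\ forall f, L f -> mvalid (flower m n) f.

Definition S_L_core (L : mform -> Prop) (m : nat) (n : Z) : Prop :=
  S_L L m n /\ m <> 1%nat /\ ~ (-1 <= n <= 1).

Inductive fo : Type :=
| FR : nat -> nat -> fo
| FEq : nat -> nat -> fo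
| FNeg : fo -> fo
| FOr : fo -> fo -> fo
| FAll : nat -> fo -> fo.

Definition FAnd (a b : fo) : fo := FNeg (FOr (FNeg a) (FNeg b)).
Definition FImp (a b : fo) : fo := FOr (FNeg a) b.
Definition FIff (a b : fo) : fo := FAnd (FImp a b) (FImp b a).
Definition FEx (y : nat) (a : fo) : fo := FNeg (FAll y (FNeg a)).

Definition upd {D : Type} (g : nat -> D) (y : nat) (d : D) : nat -> D :=
  fun v => if Nat.eqb v y then d else g v.

Fixpoint fsat (F : frame) (g : nat -> world F) (A : fo) : Prop :=
  match A with
  | FR y z => rel F (g y) (g z)
  | FEq y z => g y = g z
  | FNeg B => ~ fsat F g B
  | FOr B C => fsat F g B \/ fsat F g C
  | FAll y B => forall d : world F, fsat F (upd g y d) B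
  end.

Definition fmodels (F : frame) (A : fo) : Prop := forall g, fsat F g A.

Fixpoint free_in (x : nat) (A : fo) : Prop :=
  match A with
  | FR y z => x = y \/ x = z
  | FEq y z => x = y \/ x = z
  | FNeg B => free_in x B
  | FOr B C => free_in x B \/ free_in x C
  | FAll y B => x <> y /\ free_in x B
  end.

Definition sentence (A : fo) : Prop := forall x, ~ free_in x A.

Fixpoint occurs (x : nat) (A : fo) : Prop :=
  match A with
  | FR y z => x = y \/ x = z
  | FEq y z => x = y \/ x = z
  | FNeg B => occurs x B
  | FOr B C => occurs x B \/ occurs x C
  | FAll y B => x = y \/ occurs x B
  end.

Fixpoint qd (A : fo) : nat :=
  match A with
  | FR _ _ | FEq _ _ => 0%nat
  | FNeg B => qd B
  | FOr B C => Nat.max (qd B) (qd C)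
  | FAll _ B => S (qd B)
  end.

Definition qdd (A : fo) : nat := Nat.max (qd A) 3.

Definition freshz (x y : nat) : nat := S (Nat.max x y).

Fixpoint tau (x : nat) (A : fo) : fo :=
  match A with
  | FR y z => FR y z
  | FEq y z => FEq y z
  | FNeg B => FNeg (tau x B)
  | FOr B C => FOr (tau x B) (tau x C)
  | FAll y B =>
      let z := freshz x y in
      FAll y (FImp (FOr (FEq x y) (FEx z (FAnd (FR x z) (FR z y)))) (tau x B))
  end.

Definition in_Th (C : frame -> Prop) (A : fo) : Prop :=
  forall F, C F -> fmodels F A.

Definition modally_definable (C : frame -> Prop) (A : fo) : Prop :=
  exists psi : mform, forall F, C F -> (mvalid F psi <-> fmodels F A).

Definition Pi (k : nat) (A : fo) (m : nat) (n : Z) : Prop :=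
  (1 <= m)%nat /\ -1 <= n /\
  (((2 <= m)%nat /\ 2 <= n) -> Z.of_nat m + n <= Z.of_nat k) /\
  (m = 1%nat -> n <= Z.of_nat (qdd A)) /\
  (-1 <= n <= 1 -> (m <= qdd A)%nat).

Definition k_bound (L : mform -> Prop) (k : nat) : Prop :=
  (4 <= k)%nat /\
  forall m n, (1 <= m)%nat -> -1 <= n -> S_L_core L m n -> Z.of_nat m + n <= Z.of_nat k.

(* Main.v *)
Require Import Defs.
From Stdlib Require Import ZArith List Arith Lia Classical ClassicalEpsilon ProofIrrelevance.
Import ListNotations.
Local Open Scope nat_scope.

Definition atl {X : Type} (P : X -> Prop) (i : nat) : Prop :=
  exists l : list X, NoDup l /\ length l = i /\ forall x, In x l -> P x.

Lemma atl_S {X} (P : X -> Prop) i : atl P (S i) -> atl P i.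
Proof.
  intros [l [Hn [Hl Hp]]]. destruct l as [|a l]; [discriminate|].
  inversion Hn; subst. exists l; simpl in *; repeat split; auto.
Qed.

Lemma atl_mono {X} (P : X -> Prop) i j : atl P i -> j <= i -> atl P j.
Proof.
  intros H Hle. induction Hle; auto. apply IHHle, atl_S, H.
Qed.

Lemma atl_0 {X} (P : X -> Prop) : atl P 0.
Proof. exists []; simpl; repeat split; auto. constructor. contradiction. Qed.

Lemma atl_ext {X} (P P' : X -> Prop) i : (forall x, P x -> P' x) -> atl P i -> atl P' i.
Proof. intros H [l [a [b c]]]. exists l; repeat split; auto. Qed.

Lemma atl_iff {X} (P P' : X -> Prop) i : (forall x, P x <-> P' x) -> (atl P i <-> atl P' i).
Proof. intros H; split; apply atl_ext; firstorder. Qed.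

Lemma atl_none {X} (P : X -> Prop) i : (forall x, ~ P x) -> (atl P i <-> i = 0).
Proof.
  intros H; split.
  - intros [l [_ [Hl Hp]]]. destruct l as [|a l]; simpl in *; auto. exfalso; apply (H a); auto.
  - intros ->; apply atl_0.
Qed.

Lemma len_le1 {X} (l : list X) : NoDup l -> (forall x y, In x l -> In y l -> x = y) -> length l <= 1.
Proof.
  intros Hn H. destruct l as [|a [|b l]]; simpl; try lia.
  inversion Hn as [|? ? Hni]; subst. exfalso. apply Hni. rewrite (H a b); simpl; auto.
Qed.

Lemma atl_single {X} (P : X -> Prop) a i : P a -> (forall x, P x -> x = a) -> (atl P i <-> i <= 1).
Proof.
  intros Ha H; split.
  - intros [l [Hn [Hl Hp]]]. subst. apply len_le1; auto.
    intros x y Hx Hy. rewrite (H x), (H y); auto.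
  - intros Hi. destruct i as [|[|i]]; try lia. apply atl_0.
    exists [a]; simpl; repeat split; auto. constructor; auto. constructor.
    intros x [->|[]]; auto.
Qed.

Lemma trunc_ex {X} (P : X -> Prop) (Q : nat) :
  exists c, c <= Q /\ forall i, i <= Q -> (atl P i <-> i <= c).
Proof.
  induction Q as [|Q IH].
  - exists 0; split; auto. intros i Hi. assert (i = 0) by lia; subst; split; auto using atl_0.
  - destruct IH as [c [Hc H]].
    destruct (classic (c = Q /\ atl P (S Q))) as [[-> HS]|Hn].
    + exists (S Q); split; auto. intros i Hi; split; intros; auto.
      eapply atl_mono; eauto.
    + exists c; split; [lia|]. intros i Hi. destruct (Nat.eq_dec i (S Q)) as [->|Hne].
      * split; [|lia]. intros HS. exfalso. apply Hn. split; auto.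
        destruct (Nat.eq_dec c Q) as [|Hcq]; auto. exfalso.
        assert (atl P (S c)) by (eapply atl_mono; eauto; lia).
        assert (S c <= c) by (apply H; auto; lia). lia.
      * apply H; lia.
Qed.

Lemma pigeon {X} (L K : list X) : NoDup L -> length K < length L -> exists e, In e L /\ ~ In e K.
Proof.
  intros Hn Hl. apply NNPP; intro Hc. 
  assert (incl L K). { intros e He. apply NNPP; intro. apply Hc; eauto. }
  pose proof (NoDup_incl_length Hn H). lia.
Qed.

Lemma dedup_ex {X} (l : list X) : exists l', NoDup l' /\ (forall x, In x l <-> In x l') /\ length l' <= length l.
Proof.
  induction l as [|a l IH].
  - exists []; simpl; repeat split; auto; constructor.
  - destruct IH as [l' [Hn [Hi Hl]]].
    destruct (classic (In a l')).
    + exists l'; repeat split; simpl; try lia; auto.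
      intros [->|]; auto; apply Hi; auto. intros; right; apply Hi; auto.
    + exists (a :: l'); repeat split; simpl; try lia. constructor; auto.
      intros [->|]; auto; right; apply Hi; auto.
      intros [->|]; auto; right; apply Hi; auto.
Qed.

Lemma sig_inj {X} (Pw : X -> Prop) (u v : {x | Pw x}) : proj1_sig u = proj1_sig v -> u = v.
Proof. destruct u, v; simpl; intros; subst. f_equal; apply proof_irrelevance. Qed.

Lemma atl_sig {X} (Pw P : X -> Prop) i : (forall x, P x -> Pw x) ->
  (atl (fun u : {x | Pw x} => P (proj1_sig u)) i <-> atl P i).
Proof.
  intros HP; split.
  - intros [l [Hn [Hl Hp]]]. exists (map (@proj1_sig _ _) l). repeat split.
    + apply NoDup_map_NoDup_ForallPairs; auto. intros a b _ _; apply sig_inj.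
    + rewrite length_map; auto.
    + intros x Hx. apply in_map_iff in Hx. destruct Hx as [u [<- Hu]]. auto.
  - intros [l [Hn [Hl Hp]]]. subst i.
    assert (exists l' : list {x | Pw x}, map (@proj1_sig _ _) l' = l).
    { clear Hn. induction l as [|a l IH]. exists []; auto.
      destruct IH as [l' Hl']. intros; apply Hp; simpl; auto.
      exists (exist _ a (HP a (Hp a (or_introl eq_refl))) :: l'); simpl; f_equal; auto. }
    destruct H as [l' <-]. exists l'. repeat split.
    + eapply NoDup_map_inv; eauto.
    + rewrite length_map; auto.
    + intros u Hu. apply Hp. apply in_map; auto.
Qed.
Local Open Scope nat_scope.

Definition euclid (F : frame) : Prop :=
  forall s t u, rel F s t -> rel F s u -> rel F t u.

Definition bval (P : Prop) : bool := if excluded_middle_informative P then true else false.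
Lemma bval_true P : bval P = true <-> P.
Proof. unfold bval; destruct excluded_middle_informative; split; auto; discriminate. Qed.

Lemma peval_msat F V w f :
  peval (fun g => bval (msat F V w g)) f = true <-> msat F V w f.
Proof.
  induction f; simpl.
  - apply bval_true.
  - split; [discriminate|contradiction].
  - rewrite Bool.negb_true_iff, <- IHf. destruct (peval _ f); split; intros; congruence.
  - rewrite Bool.orb_true_iff, IHf1, IHf2; tauto.
  - apply bval_true.
Qed.

Lemma msat_subst F V s f w :
  msat F V w (msubst s f) <-> msat F (fun p u => msat F V u (s p)) w f.
Proof.
  revert w; induction f; intros w; simpl; try tauto.
  - rewrite IHf; tauto.
  - rewrite IHf1, IHf2; tauto.
  - split; intros H v Hv; apply IHf; auto.
Qed.

Lemma valid_logic F : modal_logic (mvalid F).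
Proof.
  repeat split.
  - intros f Ht V w. apply peval_msat, Ht.
  - intros a b V w; simpl.
    destruct (classic (forall v, rel F w v -> msat F V v b)) as [Hb|Hb].
    + right; right; auto.
    + apply not_all_ex_not in Hb. destruct Hb as [v Hv].
      apply imply_to_and in Hv. destruct Hv as [Hr Hnb].
      destruct (classic (msat F V v a)) as [Ha|Ha].
      * left. intro H. destruct (H v Hr); auto.
      * right; left. intro H. apply Ha, H, Hr.
  - intros s f Hf V w. apply msat_subst, Hf.
  - intros a b Hab Ha V w. destruct (Hab V w) as [H|H]; simpl in H; auto.
    exfalso; apply H, Ha.
  - intros a Ha V w v _. apply Ha.
Qed.

Lemma ax5_valid F : euclid F -> forall psi, mvalid F (ax5 psi).
Proof.
  intros HE psi V w; simpl.
  destruct (classic (forall v, rel F w v -> ~ msat F V v psi)) as [H|H].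
  - left. intro H2. apply H2. exact H.
  - right. intros v Hv Hc. apply H. intros u Hu Hnu.
    apply (Hc u (HE _ _ _ Hv Hu)). exact Hnu.
Qed.

Lemma sound (L : mform -> Prop) phi F :
  (forall f, L f <-> K5plus phi f) -> euclid F -> mvalid F phi -> forall f, L f -> mvalid F f.
Proof.
  intros HL HE Hp f Hf. apply HL in Hf. apply Hf; auto using valid_logic, ax5_valid.
Qed.

Lemma FrL_euclid L F : euclidean_logic L -> FrL L F -> euclid F.
Proof.
  intros [_ [_ H5]] [_ HF] s t u Hst Hsu.
  pose proof (HF _ (H5 (MVar 0)) (fun _ v => v = u) s) as H. simpl in H.
  destruct H as [H|H].
  - exfalso. apply H. intro H2. apply (H2 u Hsu). reflexivity.
  - specialize (H t Hst). apply NNPP; intro Hn. apply H. intros v Hv Heq.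
    subst; auto.
Qed.

Lemma FrL_phi L phi F : (forall f, L f <-> K5plus phi f) -> FrL L F -> mvalid F phi.
Proof. intros HL [_ HF]. apply HF, HL. intros L' _ _ H; exact H. Qed.

Lemma FrL_intro L phi F : (forall f, L f <-> K5plus phi f) -> inhabited (world F) -> euclid F -> mvalid F phi -> FrL L F.
Proof. intros HL Hi HE Hp; split; auto. eapply sound; eauto. Qed.

Lemma pmorph_sat (M N : frame) (f : world M -> world N) :
  (forall a b, rel M a b -> rel N (f a) (f b)) ->
  (forall a e, rel N (f a) e -> exists b, rel M a b /\ f b = e) ->
  forall V psi a, msat M (fun p u => V p (f u)) a psi <-> msat N V (f a) psi.
Proof.
  intros H1 H2 V psi; induction psi; intros a; simpl; try tauto.
  - rewrite IHpsi; tauto.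
  - rewrite IHpsi1, IHpsi2; tauto.
  - split.
    + intros H e He. destruct (H2 a e He) as [b [Hb <-]]. apply IHpsi, H, Hb.
    + intros H b Hb. apply IHpsi, H, H1, Hb.
Qed.

Lemma pmorph_valid (M N : frame) (f : world M -> world N) :
  (forall a b, rel M a b -> rel N (f a) (f b)) ->
  (forall a e, rel N (f a) e -> exists b, rel M a b /\ f b = e) ->
  (forall e, exists a, f a = e) ->
  forall psi, mvalid M psi -> mvalid N psi.
Proof.
  intros H1 H2 H3 psi H V e. destruct (H3 e) as [a <-].
  apply (pmorph_sat M N f H1 H2). apply H.
Qed.

Definition Pw (F : frame) (w : world F) (v : world F) : Prop :=
  w = v \/ exists z, rel F w z /\ rel F z v.

Definition Gw (F : frame) (w : world F) : frame :=
  {| world := { v | Pw F w v }; rel := fun a b => rel F (proj1_sig a) (proj1_sig b) |}.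

Lemma Pw_closed F w : euclid F -> forall u v, Pw F w u -> rel F u v -> Pw F w v.
Proof.
  intros HE u v [<-|[z [Hz Hzu]]] Huv; right.
  - exists v; split; auto. eapply HE; eauto.
  - exists z; split; auto.
    assert (Hzz : rel F z z) by (eapply HE; eauto).
    assert (Huz : rel F u z) by (eapply HE; eauto).
    eapply HE; eauto.
Qed.

Lemma Gw_sat F w (HE : euclid F) V (V' : nat -> world (Gw F w) -> Prop) :
  (forall p u, V' p u <-> V p (proj1_sig u)) ->
  forall psi u, msat (Gw F w) V' u psi <-> msat F V (proj1_sig u) psi.
Proof.
  intros HV psi; induction psi; intros u; simpl; try tauto.
  - apply HV.
  - rewrite IHpsi; tauto.
  - rewrite IHpsi1, IHpsi2; tauto.
  - split.
    + intros H v Hv. 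
      pose (v' := exist (Pw F w) v (Pw_closed F w HE _ _ (proj2_sig u) Hv)).
      apply (IHpsi v'). apply H. exact Hv.
    + intros H v Hv. apply IHpsi, H, Hv.
Qed.

Lemma Gw_valid F w : euclid F -> forall psi, mvalid F psi -> mvalid (Gw F w) psi.
Proof.
  intros HE psi H V' u.
  set (V := fun p (x : world F) => exists Hx : Pw F w x, V' p (exist _ x Hx)).
  apply (Gw_sat F w HE V V').
  - intros p [x Hx]; simpl; split.
    + intros; exists Hx; auto.
    + intros [Hx' H']. replace Hx with Hx' by apply proof_irrelevance. auto.
  - apply H.
Qed.

Lemma Gw_valid_back F : euclid F -> forall psi, (forall w, mvalid (Gw F w) psi) -> mvalid F psi.
Proof.
  intros HE psi H V u.
  pose (u' := exist (Pw F u) u (or_introl eq_refl)).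
  apply (Gw_sat F u HE V (fun p x => V p (proj1_sig x))) with (u := u'); [tauto|].
  apply H.
Qed.

Lemma Gw_euclid F w : euclid F -> euclid (Gw F w).
Proof. intros HE [a ?] [b ?] [c ?]; simpl; apply HE. Qed.
Local Open Scope nat_scope.

Definition Rt (i j : nat) : Prop := (i = 0 /\ j = 1) \/ (i <> 0 /\ j <> 0).

Definition typed (F : frame) (ty : world F -> nat) : Prop :=
  (forall a, ty a <= 2) /\ forall a b, rel F a b <-> Rt (ty a) (ty b).

Definition cnt (F : frame) (ty : world F -> nat) (t i : nat) : Prop :=
  atl (fun a => ty a = t) i.

Definition iso (M N : frame) (tyM : world M -> nat) (tyN : world N -> nat)
  (S : list nat) (g : nat -> world M) (h : nat -> world N) : Prop :=
  forall u v, In u S -> In v S -> (g u = g v <-> h u = h v) /\ tyM (g u) = tyN (h u).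

Definition counts (M N : frame) (tyM : world M -> nat) (tyN : world N -> nat) (q : nat) : Prop :=
  forall t i, t <= 2 -> i <= q -> (cnt M tyM t i <-> cnt N tyN t i).

Lemma iso_sym M N tyM tyN S g h : iso M N tyM tyN S g h -> iso N M tyN tyM S h g.
Proof. intros H u v Hu Hv. destruct (H u v Hu Hv) as [H1 H2]. split; [tauto|auto]. Qed.

Lemma counts_sym M N tyM tyN q : counts M N tyM tyN q -> counts N M tyN tyM q.
Proof. intros H t i Ht Hi. symmetry; auto. Qed.

Lemma nodup_map_transfer {X Y Z} (g : X -> Y) (h : X -> Z) (U : list X) :
  NoDup (map g U) -> (forall x y, In x U -> In y U -> h x = h y -> g x = g y) -> NoDup (map h U).
Proof.
  induction U as [|a U IH]; simpl; intros Hn H; constructor.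
  - inversion Hn; subst. intro Hin. apply in_map_iff in Hin. destruct Hin as [b [Hb Hbin]].
    apply H2. rewrite (H a b); auto. apply in_map; auto.
  - inversion Hn; subst. apply IH; auto.
Qed.

Lemma lift_list {X Y} (g : X -> Y) (S0 : list X) (LM : list Y) :
  (forall d, In d LM -> exists u, In u S0 /\ g u = d) ->
  exists U, map g U = LM /\ forall u, In u U -> In u S0.
Proof.
  induction LM as [|d LM IH]; intros H.
  - exists []; simpl; split; auto; contradiction.
  - destruct IH as [U [HU HU2]]. intros; apply H; simpl; auto.
    destruct (H d (or_introl eq_refl)) as [u [Hu Hgu]].
    exists (u :: U); simpl; split. f_equal; auto.
    intros x [<-|Hx]; auto.
Qed.

Lemma upd_eq {D} (g : nat -> D) y d : upd g y d y = d.
Proof. unfold upd; rewrite Nat.eqb_refl; auto. Qed.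
Lemma upd_neq {D} (g : nat -> D) y d v : v <> y -> upd g y d v = g v.
Proof. intros H; unfold upd; apply Nat.eqb_neq in H; rewrite H; auto. Qed.

Ltac updsimp := repeat first [rewrite upd_eq | match goal with H : ?v <> ?y |- context [upd _ ?y _ ?v] => rewrite (upd_neq _ _ _ _ H) end].

Lemma ext_step M N tyM tyN q S g h y (e : world N) :
  typed M tyM -> typed N tyN -> counts M N tyM tyN q -> iso M N tyM tyN S g h ->
  length S + 1 <= q ->
  exists d, iso M N tyM tyN (y :: S) (upd g y d) (upd h y e).
Proof.
  intros [HtM HrM] [HtN HrN] Hc Hiso Hlen.
  set (S0 := filter (fun u => negb (u =? y)) S).
  assert (HS0 : forall u, In u S0 <-> In u S /\ u <> y).
  { intro u; unfold S0; rewrite filter_In, Bool.negb_true_iff, Nat.eqb_neq; tauto. }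
  assert (HlS0 : length S0 <= length S) by apply filter_length_le.
  assert (HyS : forall u, In u (y :: S) -> u <> y -> In u S0).
  { intros u [Hu|Hu] Hne; [congruence|]. apply HS0; auto. }
  assert (Hgood : forall d, tyM d = tyN e -> (forall u, In u S0 -> g u <> d /\ h u <> e) ->
             iso M N tyM tyN (y :: S) (upd g y d) (upd h y e)).
  { intros d Hd Hfr u v Hu Hv. 
    destruct (Nat.eq_dec u y) as [Euy|Euy]; destruct (Nat.eq_dec v y) as [Evy|Evy];
      try subst u; try subst v; updsimp.
    - split; auto; tauto.
    - assert (In v S0) by (apply HyS; auto).
      destruct (Hfr v H). split; auto. split; intro; congruence.
    - assert (In u S0) by (apply HyS; auto).
      destruct (Hfr u H). split; [split; intro; congruence|]. destruct (Hiso u u) as [_ Hx]; try apply HS0; auto.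
    - assert (In u S0) by (apply HyS; auto).
      assert (In v S0) by (apply HyS; auto).
      apply Hiso; apply HS0; auto. }
  destruct (classic (exists u, In u S0 /\ h u = e)) as [[u [Hu Hue]]|Hne].
  - exists (g u). intros u1 v1 Hu1 Hv1. 
    assert (Hu' : In u S /\ u <> y) by (apply HS0; auto).
    destruct (Nat.eq_dec u1 y) as [Euy|Euy]; destruct (Nat.eq_dec v1 y) as [Evy|Evy];
      try subst u1; try subst v1; updsimp; subst e.
    + split; [tauto|]. destruct (Hiso u u) as [_ Hx]; tauto.
    + assert (In v1 S) by (apply HS0, HyS; auto).
      destruct (Hiso u v1) as [H1 H2]; tauto.
    + assert (In u1 S) by (apply HS0, HyS; auto).
      destruct (Hiso u1 u) as [H1 H2]; tauto.
    + assert (In u1 S) by (apply HS0, HyS; auto).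
      assert (In v1 S) by (apply HS0, HyS; auto). apply Hiso; auto.
  - set (t := tyN e).
    set (KN := filter (fun a => bval (tyN a = t)) (map h S0)).
    destruct (dedup_ex KN) as [DN [HDn [HDi HDl]]].
    assert (HKl : length KN <= length S0).
    { unfold KN. etransitivity. apply filter_length_le. rewrite length_map; auto. }
    assert (HeD : ~ In e DN).
    { intro H. apply HDi in H. unfold KN in H. apply filter_In in H. destruct H as [H _].
      apply in_map_iff in H. destruct H as [u [Hu1 Hu2]]. apply Hne; eauto. }
    assert (HcN : cnt N tyN t (Datatypes.S (length DN))).
    { exists (e :: DN). repeat split. constructor; auto. 
      intros a [<-|Ha]; auto. apply HDi in Ha. unfold KN in Ha.
      apply filter_In in Ha. apply bval_true; tauto. }
    assert (HcM : cnt M tyM t (Datatypes.S (length DN))).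
    { apply Hc; auto. unfold t; auto. lia. }
    destruct HcM as [LM [HLn [HLl HLt]]].
    destruct (classic (exists d, In d LM /\ ~ In d (map g S0))) as [[d [Hd1 Hd2]]|Hall].
    + exists d. apply Hgood. apply HLt; auto.
      intros u Hu; split.
      * intro Heq; apply Hd2; rewrite <- Heq; apply in_map; auto.
      * intro Heq; apply Hne; eauto.
    + exfalso.
      destruct (lift_list g S0 LM) as [U [HU1 HU2]].
      { intros d Hd. destruct (classic (In d (map g S0))) as [Hi|Hi].
        apply in_map_iff in Hi; destruct Hi as [u [? ?]]; eauto.
        exfalso; apply Hall; eauto. }
      assert (HNU : NoDup (map h U)).
      { apply nodup_map_transfer with (g := g). rewrite HU1; auto.
        intros a b Ha Hb Hab. apply Hiso; try apply HS0; auto. }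
      assert (incl (map h U) DN).
      { intros z Hz. apply in_map_iff in Hz. destruct Hz as [u [<- Hu]].
        apply HDi. unfold KN. apply filter_In. split. apply in_map; auto.
        apply bval_true. 
        assert (Hgu : In (g u) LM) by (rewrite <- HU1; apply in_map; auto).
        pose proof (HLt _ Hgu) as Ht1. 
        destruct (Hiso u u) as [_ Ht2]; try (apply HS0; auto). congruence. }
      pose proof (NoDup_incl_length HNU H). rewrite length_map in H0.
      assert (length U = length LM) by (rewrite <- HU1, length_map; auto). lia.
Qed.

Lemma EF_main M N tyM tyN q :
  typed M tyM -> typed N tyN -> counts M N tyM tyN q ->
  forall B j S g h, qd B <= j -> (forall v, free_in v B -> In v S) ->
  length S + j <= q -> iso M N tyM tyN S g h -> (fsat M g B <-> fsat N h B).
Proof.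
  intros HM HN Hc B. induction B as [y z|y z|B IH|B1 IH1 B2 IH2|y B IH];
    intros j S g h Hq Hf Hl Hi; simpl in *.
  - destruct HM as [_ HM]; destruct HN as [_ HN]. rewrite HM, HN.
    destruct (Hi y y) as [_ Hy]; auto. destruct (Hi z z) as [_ Hz]; auto.
    rewrite Hy, Hz; tauto.
  - apply Hi; auto.
  - rewrite (IH j S g h); auto; tauto.
  - rewrite (IH1 j S g h), (IH2 j S g h); auto; try lia; try tauto.
  - assert (Hf' : forall v, free_in v B -> In v (y :: S)).
    { intros v Hv. destruct (Nat.eq_dec v y); [left; auto|right; apply Hf; auto]. }
    split.
    + intros H e. destruct (ext_step M N tyM tyN q S g h y e HM HN Hc Hi) as [d Hd]; [lia|].
      apply (IH (j - 1) (y :: S) (upd g y d) (upd h y e)); simpl; auto; try lia.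
    + intros H d. destruct (ext_step N M tyN tyM q S h g y d HN HM (counts_sym _ _ _ _ _ Hc) (iso_sym _ _ _ _ _ _ _ Hi)) as [e He]; [lia|].
      apply (IH (j - 1) (y :: S) (upd g y d) (upd h y e)); simpl; auto; try lia.
      apply iso_sym; auto.
Qed.

Lemma EF_sentence M N tyM tyN A :
  typed M tyM -> typed N tyN -> inhabited (world M) -> inhabited (world N) ->
  counts M N tyM tyN (qd A) -> sentence A -> (fmodels M A <-> fmodels N A).
Proof.
  intros HM HN [m0] [n0] Hc HA.
  assert (forall g h, fsat M g A <-> fsat N h A).
  { intros g h. apply (EF_main M N tyM tyN (qd A) HM HN Hc A (qd A) [] g h); simpl; auto.
    all: try (intros u v []); try (intros v Hv; destruct (HA v Hv)); try lia. }
  split; intros H1 g. apply (H (fun _ => m0)), H1. apply (H g (fun _ => n0)), H1.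
Qed.
Local Open Scope nat_scope.

Lemma coincide F B : forall g h, (forall v, free_in v B -> g v = h v) -> (fsat F g B <-> fsat F h B).
Proof.
  induction B as [y z|y z|B IH|B1 IH1 B2 IH2|y B IH]; intros g h H; simpl in *.
  - rewrite (H y), (H z); auto; tauto.
  - rewrite (H y), (H z); auto; tauto.
  - rewrite (IH g h); auto; tauto.
  - rewrite (IH1 g h), (IH2 g h); auto; tauto.
  - assert (Hu : forall d v, free_in v B -> upd g y d v = upd h y d v).
    { intros d v Hv; destruct (Nat.eq_dec v y); [subst; rewrite !upd_eq; auto| rewrite !upd_neq; auto]. }
    split; intros H1 d; [apply (IH (upd g y d))|apply (IH _ (upd h y d))]; auto.
Qed.

Lemma sentence_fmodels F A g : sentence A -> (fsat F g A <-> fmodels F A).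
Proof.
  intros HA; split; [|intros H; apply H].
  intros H h. apply (coincide F A g h); auto. intros v Hv; destruct (HA v Hv).
Qed.

Lemma guard_sat F h x y d (w : world F) : h x = w -> x <> y ->
  (fsat F (upd h y d) (FOr (FEq x y) (FEx (freshz x y) (FAnd (FR x (freshz x y)) (FR (freshz x y) y))))
   <-> Pw F w d).
Proof.
  intros Hx Hxy. unfold Pw, FEx, FAnd, freshz; simpl.
  set (z := Datatypes.S (Nat.max x y)).
  assert (Hzx : x <> z) by (unfold z; lia). assert (Hzy : y <> z) by (unfold z; lia).
  rewrite upd_eq, (upd_neq _ _ _ _ Hxy), Hx.
  assert (E : forall c, upd (upd h y d) z c x = w /\ upd (upd h y d) z c z = c /\ upd (upd h y d) z c y = d).
  { intros c. rewrite upd_eq, (upd_neq _ _ _ _ Hzx), (upd_neq _ _ _ _ Hzy), (upd_neq _ _ _ _ Hxy), upd_eq; auto. }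
  split.
  - intros [H|H]; [left; auto|right]. apply NNPP; intro Hn; apply H; intros c Hc.
    destruct (E c) as [E1 [E2 E3]]. rewrite E1, E2, E3 in Hc.
    apply Hn. exists c. split; apply NNPP; intro; apply Hc; auto.
  - intros [H|[c [H1 H2]]]; [left; auto|right]. intro H. apply (H c).
    destruct (E c) as [E1 [E2 E3]]. rewrite E1, E2, E3. intros [H3|H3]; auto.
Qed.

Lemma rel_tau F (w : world F) x : forall B, ~ occurs x B ->
  forall (h : nat -> world F) (h' : nat -> world (Gw F w)), h x = w ->
  (forall v, free_in v B -> h v = proj1_sig (h' v)) ->
  (fsat F h (tau x B) <-> fsat (Gw F w) h' B).
Proof.
  induction B as [y z|y z|B IH|B1 IH1 B2 IH2|y B IH]; intros Hoc h h' Hx Hv; simpl in *.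
  - rewrite (Hv y), (Hv z); auto; tauto.
  - rewrite (Hv y), (Hv z); auto. split; [apply sig_inj|intros ->; auto].
  - rewrite (IH Hoc h h'); auto; tauto.
  - rewrite (IH1 ltac:(tauto) h h'), (IH2 ltac:(tauto) h h'); auto; tauto.
  - assert (Hxy : x <> y) by tauto.
    assert (HB : ~ occurs x B) by tauto.
    split.
    + intros H d'. specialize (H (proj1_sig d')).
      destruct H as [H|H].
      * exfalso. apply H. apply (proj2 (guard_sat F h x y _ w Hx Hxy)). apply (proj2_sig d').
      * apply (IH HB (upd h y (proj1_sig d')) (upd h' y d')); auto.
        rewrite upd_neq; auto.
        intros v Hfv. destruct (Nat.eq_dec v y); [subst; rewrite !upd_eq; auto|rewrite !upd_neq; auto].
    + intros H d. destruct (classic (Pw F w d)) as [Hd|Hd].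
      * right. apply (IH HB (upd h y d) (upd h' y (exist _ d Hd))); auto.
        rewrite upd_neq; auto.
        intros v Hfv. destruct (Nat.eq_dec v y); [subst; rewrite !upd_eq; auto|rewrite !upd_neq; auto].
      * left. intro Hg. apply Hd. apply (proj1 (guard_sat F h x y d w Hx Hxy)); auto.
Qed.

Definition Gw_root F (w : world F) : world (Gw F w) := exist (Pw F w) w (or_introl eq_refl).

Lemma tau_all F x A g : euclid F -> sentence A -> ~ occurs x A ->
  (fsat F g (FAll x (tau x A)) <-> forall w, fmodels (Gw F w) A).
Proof.
  intros HE HA Hoc; simpl. split.
  - intros H w. apply (sentence_fmodels _ _ (fun _ => Gw_root F w)); auto.
    apply (rel_tau F w x A Hoc (upd g x w)); auto. apply upd_eq.
    intros v Hv; destruct (HA v Hv).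
  - intros H w. apply (rel_tau F w x A Hoc (upd g x w) (fun _ => Gw_root F w)).
    all: first [apply upd_eq | (intros v Hv; destruct (HA v Hv)) | apply H].
Qed.
Local Open Scope nat_scope.

Lemma typed_euclid F ty : typed F ty -> euclid F.
Proof.
  intros [Hb Hr] s t u H1 H2. apply Hr in H1, H2. apply Hr. unfold Rt in *. lia.
Qed.

Lemma cnt_range (B : nat -> Prop) (T : {i | B i} -> Prop) st N i :
  (forall a, T a <-> st <= proj1_sig a < st + N) -> (forall k, st <= k < st + N -> B k) ->
  (atl T i <-> i <= N).
Proof.
  intros HT HB; split.
  - intros [l [Hn [Hl Hp]]]. subst i.
    assert (NoDup (map (@proj1_sig _ _) l)).
    { apply NoDup_map_NoDup_ForallPairs; auto. intros a b _ _; apply sig_inj. }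
    assert (incl (map (@proj1_sig _ _) l) (seq st N)).
    { intros k Hk. apply in_map_iff in Hk. destruct Hk as [a [<- Ha]].
      apply in_seq. apply HT, Hp, Ha. }
    pose proof (NoDup_incl_length H H0). rewrite length_map, length_seq in H1; auto.
  - intros Hi.
    assert (forall i, i <= N -> exists l : list {i | B i}, NoDup l /\ length l = i /\
               forall a, In a l -> st <= proj1_sig a < st + i).
    { clear i Hi. intros i; induction i as [|i IH]; intros Hi.
      - exists []; split; [constructor|split; [reflexivity|intros ? []]].
      - destruct IH as [l [Hn [Hl Hp]]]; [lia|].
        exists (exist B (st + i) (HB (st + i) ltac:(lia)) :: l); simpl; split; [|split].
        + constructor; auto. intro Hin. apply Hp in Hin. simpl in Hin. lia.
        + lia.
        + intros a [<-|Ha]; simpl; [lia|]. apply Hp in Ha. lia. }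
    destruct (H i Hi) as [l [Hn [Hl Hp]]]. exists l; repeat split; auto.
    intros a Ha. apply HT. apply Hp in Ha. lia.
Qed.

Definition tyP (m n : nat) (a : world (flower_pos m n)) : nat :=
  let i := proj1_sig a in if i =? 0 then 0 else if i <=? m then 1 else 2.

Lemma tyP_spec m n a :
  (tyP m n a = 0 /\ proj1_sig a = 0) \/ (tyP m n a = 1 /\ 1 <= proj1_sig a <= m) \/
  (tyP m n a = 2 /\ m < proj1_sig a <= m + n).
Proof.
  unfold tyP. destruct a as [i Hi]; simpl.
  destruct (i =? 0) eqn:E1; [apply Nat.eqb_eq in E1; lia|apply Nat.eqb_neq in E1].
  destruct (i <=? m) eqn:E2; [apply Nat.leb_le in E2|apply Nat.leb_gt in E2]; lia.
Qed.

Lemma fp_typed m n : typed (flower_pos m n) (tyP m n).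
Proof.
  split.
  - intros a; destruct (tyP_spec m n a); lia.
  - intros a b; simpl. unfold Rt.
    pose proof (tyP_spec m n a); pose proof (tyP_spec m n b).
    pose proof (proj2_sig a); pose proof (proj2_sig b); simpl in *. lia.
Qed.

Definition NP (m n t : nat) : nat := match t with 0 => 1 | 1 => m | _ => n end.

Lemma fp_cnt m n t i : t <= 2 -> (cnt (flower_pos m n) (tyP m n) t i <-> i <= NP m n t).
Proof.
  intros Ht. unfold cnt.
  destruct t as [|[|[|t]]]; try lia; simpl.
  - apply (cnt_range (fun i => i <= m + n) _ 0 1).
    intros a; pose proof (tyP_spec m n a); lia. lia.
  - apply (cnt_range (fun i => i <= m + n) _ 1 m).
    intros a; pose proof (tyP_spec m n a); lia. lia.
  - apply (cnt_range (fun i => i <= m + n) _ (m + 1) n).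
    intros a; pose proof (tyP_spec m n a); lia. lia.
Qed.

Definition mkF (m n k : nat) : world (flower_pos m n) :=
  match le_dec k (m + n) with
  | left H => exist _ k H
  | right _ => exist _ 0 (Nat.le_0_l _)
  end.

Lemma mkF_val m n k : k <= m + n -> proj1_sig (mkF m n k) = k.
Proof. intros H; unfold mkF; destruct le_dec; simpl; auto; lia. Qed.

Definition tyC (m : nat) (a : world (cluster m)) : nat := 1.

Lemma cl_typed m : typed (cluster m) (tyC m).
Proof. split; intros; unfold tyC, Rt; simpl; lia. Qed.

Definition NC (m t : nat) : nat := match t with 1 => m | _ => 0 end.

Lemma cl_cnt m t i : t <= 2 -> (cnt (cluster m) (tyC m) t i <-> i <= NC m t).
Proof.
  intros Ht. unfold cnt, tyC.
  destruct t as [|[|[|t]]]; try lia; simpl.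
  - rewrite atl_none; [lia|]. intros; lia.
  - apply (cnt_range (fun i => 1 <= i <= m) _ 1 m).
    intros a; pose proof (proj2_sig a); simpl in *; lia. lia.
  - rewrite atl_none; [lia|]. intros; lia.
Qed.

Definition mkC (m k : nat) (Hm : 1 <= m) : world (cluster m) :=
  match le_dec k m, le_dec 1 k with
  | left H, left H' => exist _ k (conj H' H)
  | _, _ => exist _ 1 (conj (le_n 1) Hm)
  end.

Lemma mkC_val m k Hm : 1 <= k <= m -> proj1_sig (mkC m k Hm) = k.
Proof. intros H; unfold mkC; destruct (le_dec k m); destruct (le_dec 1 k); simpl; auto; lia. Qed.

Definition Dfr : frame := {| world := unit; rel := fun _ _ => False |}.
Definition tyD (a : world Dfr) : nat := 0.
Lemma D_typed : typed Dfr tyD.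
Proof. split; intros; unfold tyD, Rt; simpl; lia. Qed.
Lemma D_cnt t i : t <= 2 -> (cnt Dfr tyD t i <-> i <= match t with 0 => 1 | _ => 0 end).
Proof.
  intros Ht; unfold cnt, tyD. destruct t as [|t].
  - apply (atl_single _ tt); auto. intros []; auto.
  - rewrite atl_none; [lia|]. intros; lia.
Qed.

Lemma emb_valid M N tyM tyN (iota : world N -> world M) (dflt : nat -> world N) :
  typed M tyM -> typed N tyN -> (forall a b, iota a = iota b -> a = b) ->
  (forall j, tyM (iota j) = tyN j) ->
  (forall i j i' j', i <= 2 -> j <= 2 -> Rt i j -> (i' = i \/ i' = tyN (dflt i)) ->
      (j' = j \/ j' = tyN (dflt j)) -> Rt i' j') ->
  (forall i i' (e : world N), i <= 2 -> (i' = i \/ i' = tyN (dflt i)) -> Rt i' (tyN e) -> Rt i (tyN e)) ->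
  forall psi, mvalid M psi -> mvalid N psi.
Proof.
  intros [HbM HrM] [HbN HrN] Hinj Hty HC1 HC2.
  set (f := fun u => match excluded_middle_informative (exists j, iota j = u) with
                     | left H => proj1_sig (constructive_indefinite_description _ H)
                     | right _ => dflt (tyM u) end).
  assert (Hf1 : forall j, f (iota j) = j).
  { intros j; unfold f. destruct excluded_middle_informative as [H|H].
    - destruct constructive_indefinite_description; simpl; auto.
    - exfalso; eauto. }
  assert (Hf2 : forall u, tyN (f u) = tyM u \/ tyN (f u) = tyN (dflt (tyM u))).
  { intros u; unfold f. destruct excluded_middle_informative as [H|H]; auto.
    destruct constructive_indefinite_description as [j Hj]; simpl. left; subst; auto. }
  apply (pmorph_valid M N f).
  - intros a b H. apply HrN. apply HrM in H. eapply HC1; eauto.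
  - intros a e H. exists (iota e); split; auto. apply HrM. rewrite Hty.
    apply HrN in H. eapply HC2; eauto.
  - intros e; exists (iota e); auto.
Qed.
Local Open Scope nat_scope.

Lemma fp_fp_valid m n m' n' : 1 <= m' <= m -> n' <= n ->
  forall psi, mvalid (flower_pos m n) psi -> mvalid (flower_pos m' n') psi.
Proof.
  intros Hm Hn.
  set (iota := fun j : world (flower_pos m' n') =>
         mkF m n (if proj1_sig j <=? m' then proj1_sig j else m + (proj1_sig j - m'))).
  assert (Hv : forall j, proj1_sig (iota j) = if proj1_sig j <=? m' then proj1_sig j else m + (proj1_sig j - m')).
  { intros j; unfold iota. apply mkF_val. pose proof (proj2_sig j); simpl in *.
    destruct (proj1_sig j <=? m') eqn:E; [apply Nat.leb_le in E|apply Nat.leb_gt in E]; lia. }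
  set (dflt := fun i => if i =? 0 then mkF m' n' 0 else mkF m' n' 1).
  assert (Hd : forall i, tyP m' n' (dflt i) = if i =? 0 then 0 else 1).
  { intros i; unfold dflt; destruct (i =? 0).
    - pose proof (tyP_spec m' n' (mkF m' n' 0)); rewrite mkF_val in H; lia.
    - pose proof (tyP_spec m' n' (mkF m' n' 1)); rewrite mkF_val in H; lia. }
  apply (emb_valid _ _ (tyP m n) (tyP m' n') iota dflt (fp_typed m n) (fp_typed m' n')).
  - intros a b H. apply sig_inj. assert (E : proj1_sig (iota a) = proj1_sig (iota b)) by (rewrite H; auto).
    rewrite !Hv in E. pose proof (proj2_sig a); pose proof (proj2_sig b); simpl in *.
    destruct (proj1_sig a <=? m') eqn:E1; [apply Nat.leb_le in E1|apply Nat.leb_gt in E1];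
    destruct (proj1_sig b <=? m') eqn:E2; [apply Nat.leb_le in E2|apply Nat.leb_gt in E2|apply Nat.leb_le in E2|apply Nat.leb_gt in E2]; lia.
  - intros j. pose proof (tyP_spec m n (iota j)); pose proof (tyP_spec m' n' j).
    rewrite Hv in H. pose proof (proj2_sig j); simpl in *.
    destruct (proj1_sig j <=? m') eqn:E1; [apply Nat.leb_le in E1|apply Nat.leb_gt in E1]; lia.
  - intros i j i' j' Hi Hj HR H1 H2. rewrite Hd in H1, H2. unfold Rt in *.
    destruct (i =? 0) eqn:E1; [apply Nat.eqb_eq in E1|apply Nat.eqb_neq in E1];
    destruct (j =? 0) eqn:E2; [apply Nat.eqb_eq in E2|apply Nat.eqb_neq in E2|apply Nat.eqb_eq in E2|apply Nat.eqb_neq in E2]; lia.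
  - intros i i' k Hi H1 HR. rewrite Hd in H1. generalize dependent (tyP m' n' k); intros. unfold Rt in *.
    destruct (i =? 0) eqn:E1; [apply Nat.eqb_eq in E1|apply Nat.eqb_neq in E1]; lia.
Qed.

Lemma fp_cl_valid m n m' (Hm' : 1 <= m') : m' <= m ->
  forall psi, mvalid (flower_pos m n) psi -> mvalid (cluster m') psi.
Proof.
  intros Hm.
  set (iota := fun j : world (cluster m') => mkF m n (proj1_sig j)).
  assert (Hv : forall j, proj1_sig (iota j) = proj1_sig j).
  { intros j; unfold iota. apply mkF_val. pose proof (proj2_sig j); simpl in *. lia. }
  apply (emb_valid _ _ (tyP m n) (tyC m') iota (fun _ => mkC m' 1 Hm') (fp_typed m n) (cl_typed m')).
  - intros a b H. apply sig_inj. rewrite <- (Hv a), <- (Hv b), H; auto.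
  - intros j. pose proof (tyP_spec m n (iota j)). rewrite Hv in H.
    pose proof (proj2_sig j); simpl in *. unfold tyC; lia.
  - intros. unfold tyC in *. unfold Rt in *; lia.
  - intros. unfold tyC in *. unfold Rt in *; lia.
Qed.

Lemma cl_cl_valid m m' (Hm : 1 <= m) (Hm' : 1 <= m') : m' <= m ->
  forall psi, mvalid (cluster m) psi -> mvalid (cluster m') psi.
Proof.
  intros Hmm.
  set (iota := fun j : world (cluster m') => mkC m (proj1_sig j) Hm).
  assert (Hv : forall j, proj1_sig (iota j) = proj1_sig j).
  { intros j; unfold iota. apply mkC_val. pose proof (proj2_sig j); simpl in *. lia. }
  apply (emb_valid _ _ (tyC m) (tyC m') iota (fun _ => mkC m' 1 Hm') (cl_typed m) (cl_typed m')).
  - intros a b H. apply sig_inj. rewrite <- (Hv a), <- (Hv b), H; auto.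
  - intros j. unfold tyC; auto.
  - intros. unfold tyC in *. unfold Rt in *; lia.
  - intros. unfold tyC in *. unfold Rt in *; lia.
Qed.

Local Open Scope Z_scope.

Lemma flower_neg m n : n < 0 -> flower m n = cluster m.
Proof. intros H; unfold flower. rewrite (proj2 (Z.ltb_lt _ _) H); auto. Qed.
Lemma flower_nneg m n : 0 <= n -> flower m n = flower_pos m (Z.to_nat n).
Proof. intros H; unfold flower. rewrite (proj2 (Z.ltb_ge _ _) H); auto. Qed.

Lemma flower_pmorph (m m' : nat) (n n' : Z) : (1 <= m')%nat -> (m' <= m)%nat -> -1 <= n' -> n' <= n ->
  forall psi, mvalid (flower m n) psi -> mvalid (flower m' n') psi.
Proof.
  intros H1 H2 H3 H4 psi.
  destruct (Z_lt_le_dec n' 0) as [Hn'|Hn']; [rewrite (flower_neg m' n' Hn')|rewrite (flower_nneg m' n' Hn')];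
  (destruct (Z_lt_le_dec n 0) as [Hn|Hn]; [rewrite (flower_neg m n Hn)|rewrite (flower_nneg m n Hn)]).
  - apply cl_cl_valid; lia.
  - apply fp_cl_valid; lia.
  - lia.
  - apply fp_fp_valid; lia.
Qed.

Definition NF (m : nat) (n : Z) (t : nat) : nat :=
  if n <? 0 then NC m t else NP m (Z.to_nat n) t.

Lemma flower_typed (m : nat) (n : Z) : (1 <= m)%nat -> -1 <= n ->
  exists ty, typed (flower m n) ty /\ inhabited (world (flower m n)) /\
    forall t i, (t <= 2)%nat -> (cnt (flower m n) ty t i <-> (i <= NF m n t)%nat).
Proof.
  intros Hm Hn. unfold NF.
  destruct (Z_lt_le_dec n 0) as [H|H].
  - rewrite (flower_neg m n H), (proj2 (Z.ltb_lt _ _) H).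
    exists (tyC m); split; [apply cl_typed|split]. constructor. exact (mkC m 1 Hm).
    apply cl_cnt.
  - rewrite (flower_nneg m n H), (proj2 (Z.ltb_ge _ _) H).
    exists (tyP m (Z.to_nat n)); split; [apply fp_typed|split]. constructor. exact (mkF _ _ 0).
    apply fp_cnt.
Qed.

Lemma flower_euclid m n : euclid (flower m n).
Proof.
  unfold flower; destruct (n <? 0); [apply (typed_euclid _ _ (cl_typed m))|apply (typed_euclid _ _ (fp_typed _ _))].
Qed.

Lemma flower_EF (m m' : nat) (n n' : Z) A : (1 <= m)%nat -> (1 <= m')%nat -> -1 <= n -> -1 <= n' ->
  sentence A -> (forall t i, (t <= 2)%nat -> (i <= qd A)%nat -> ((i <= NF m n t)%nat <-> (i <= NF m' n' t)%nat)) ->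
  (fmodels (flower m n) A <-> fmodels (flower m' n') A).
Proof.
  intros H1 H2 H3 H4 HA Hc.
  destruct (flower_typed m n H1 H3) as [ty [Ht [Hi Hcn]]].
  destruct (flower_typed m' n' H2 H4) as [ty' [Ht' [Hi' Hcn']]].
  apply (EF_sentence _ _ ty ty'); auto.
  intros t i Ht2 Hq. rewrite Hcn, Hcn'; auto.
Qed.
Local Open Scope nat_scope.

Definition R2 (F : frame) (w v : world F) : Prop := exists z, rel F w z /\ rel F z v.
Definition R2not (F : frame) (w v : world F) : Prop := R2 F w v /\ ~ rel F w v.


Lemma R1_R2 F w v : euclid F -> rel F w v -> R2 F w v.
Proof. intros HE H. exists v; split; auto. eapply HE; eauto. Qed.

Lemma R2_cluster F w a b : euclid F -> R2 F w a -> R2 F w b -> rel F a b.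
Proof.
  intros HE [z [Hz Hza]] [z' [Hz' Hz'b]].
  assert (rel F z z') by (eapply HE; eauto).
  assert (rel F z' z) by (eapply HE; eauto).
  assert (rel F z b) by (eapply HE; eauto).
  eapply HE; eauto.
Qed.

Lemma no_back F a w : euclid F -> rel F a w -> rel F w w.
Proof. intros HE H; eapply HE; eauto. Qed.

Lemma refl_all F w : euclid F -> rel F w w -> forall a, Pw F w a -> rel F w a.
Proof.
  intros HE Hw a [<-|[z [Hz Hza]]]; auto.
  assert (rel F z w) by (eapply HE; eauto). eapply HE; eauto.
Qed.

Lemma Pw_R2 F w a : Pw F w a -> a <> w -> R2 F w a.
Proof. intros [<-|H] Hn; [congruence|auto]. Qed.

Lemma Gw_typed_refl F w : euclid F -> rel F w w -> typed (Gw F w) (fun _ => 1).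
Proof.
  intros HE Hw. split; [auto|]. intros [a Ha] [b Hb]; simpl. unfold Rt. split; [lia|].
  intros _. pose proof (refl_all F w HE Hw a Ha). pose proof (refl_all F w HE Hw b Hb).
  eapply HE; eauto.
Qed.

Definition tyG (F : frame) (w : world F) (u : world (Gw F w)) : nat :=
  if excluded_middle_informative (proj1_sig u = w) then 0
  else if excluded_middle_informative (rel F w (proj1_sig u)) then 1 else 2.

Lemma tyG_spec F w u : (tyG F w u = 0 /\ proj1_sig u = w) \/
  (tyG F w u = 1 /\ proj1_sig u <> w /\ rel F w (proj1_sig u)) \/
  (tyG F w u = 2 /\ proj1_sig u <> w /\ ~ rel F w (proj1_sig u)).
Proof.
  unfold tyG. destruct excluded_middle_informative; auto.
  destruct excluded_middle_informative; auto.
Qed.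

Lemma Gw_typed_irr F w : euclid F -> ~ rel F w w -> typed (Gw F w) (tyG F w).
Proof.
  intros HE Hw. split.
  - intros a; destruct (tyG_spec F w a) as [[-> _]|[[-> _]|[-> _]]]; lia.
  - intros a b; simpl. unfold Rt.
    destruct (tyG_spec F w a) as [[Ea Va]|[[Ea [Va Ra]]|[Ea [Va Ra]]]];
    destruct (tyG_spec F w b) as [[Eb Vb]|[[Eb [Vb Rb]]|[Eb [Vb Rb]]]]; rewrite Ea, Eb;
    try rewrite Va; try rewrite Vb; split; intros; try lia; auto;
    try (exfalso; apply Hw; eapply no_back; eauto; fail);
    try (exfalso; apply Hw; rewrite <- Va in *; auto; fail);
    try (apply (R2_cluster F w); auto; apply Pw_R2; auto; apply (proj2_sig _); fail).
    all: try (rewrite Va in *; contradiction).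
Qed.

Lemma Gw_cnt_refl F w t i : euclid F -> rel F w w -> t <= 2 ->
  (cnt (Gw F w) (fun _ => 1) t i <-> (if t =? 1 then atl (rel F w) i else i = 0)).
Proof.
  intros HE Hw Ht. unfold cnt. destruct (t =? 1) eqn:E.
  - apply Nat.eqb_eq in E; subst.
    rewrite (atl_iff _ (fun u : world (Gw F w) => rel F w (proj1_sig u))).
    + apply atl_sig. intros x Hx; right; apply R1_R2; auto.
    + intros [a Ha]; simpl; split; auto. intros; apply refl_all; auto.
  - apply Nat.eqb_neq in E. apply atl_none. intros; lia.
Qed.

Lemma Gw_cnt_irr F w t i : euclid F -> ~ rel F w w -> t <= 2 ->
  (cnt (Gw F w) (tyG F w) t i <->
   match t with 0 => i <= 1 | 1 => atl (rel F w) i | _ => atl (R2not F w) i end).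
Proof.
  intros HE Hw Ht. unfold cnt. destruct t as [|[|[|t]]]; try lia.
  - apply (atl_single _ (Gw_root F w)).
    + destruct (tyG_spec F w (Gw_root F w)) as [[? ?]|[[? [? ?]]|[? [? ?]]]]; auto; simpl in *; congruence.
    + intros x Hx. apply sig_inj. destruct (tyG_spec F w x) as [[? ?]|[[? [? ?]]|[? [? ?]]]]; try lia. auto.
  - rewrite (atl_iff _ (fun u : world (Gw F w) => rel F w (proj1_sig u))).
    + apply atl_sig. intros x Hx; right; apply R1_R2; auto.
    + intros a. destruct (tyG_spec F w a) as [[E1 E2]|[[E1 [E2 E3]]|[E1 [E2 E3]]]]; rewrite E1; split; intros; auto; try lia.
      rewrite E2 in *; contradiction. contradiction.
  - rewrite (atl_iff _ (fun u : world (Gw F w) => R2not F w (proj1_sig u))).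
    + apply atl_sig. intros x [Hx _]; right; auto.
    + intros a. destruct (tyG_spec F w a) as [[E1 E2]|[[E1 [E2 E3]]|[E1 [E2 E3]]]]; rewrite E1; split; intros H; try lia.
      * destruct H as [H1 H2]; rewrite E2 in *. destruct H1 as [z [? ?]]. exfalso; apply Hw. eapply no_back; eauto.
      * destruct H; contradiction.
      * split; auto. apply Pw_R2; auto. apply (proj2_sig a).
Qed.

Lemma Gw_inhabited F w : inhabited (world (Gw F w)).
Proof. constructor. exact (Gw_root F w). Qed.
Local Open Scope nat_scope.

Definition MTop : mform := MNeg MBot.
Definition MAnd (a b : mform) : mform := MNeg (MOr (MNeg a) (MNeg b)).
Definition mconj (l : list mform) : mform := fold_right MAnd MTop l.

Lemma msat_and F V w a b : msat F V w (MAnd a b) <-> msat F V w a /\ msat F V w b.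
Proof. simpl. split; [intros H; split; apply NNPP; tauto|tauto]. Qed.

Lemma msat_conj F V w l : msat F V w (mconj l) <-> forall f, In f l -> msat F V w f.
Proof.
  induction l as [|a l IH]; simpl mconj.
  - simpl; split; [contradiction|]. intros _ H; auto.
  - rewrite msat_and, IH. simpl. split; [intros [H1 H2] f [<-|Hf]; auto|auto].
Qed.

Lemma msat_dia F V w f : msat F V w (MDia f) <-> exists v, rel F w v /\ msat F V v f.
Proof.
  simpl. split.
  - intros H. apply NNPP; intro Hn. apply H. intros v Hv Hf. apply Hn; eauto.
  - intros [v [Hv Hf]] H. apply (H v Hv Hf).
Qed.

Definition tri (o a : nat) (D : mform -> mform) : mform :=
  mconj (map (fun i => D (MAnd (MVar (o + i)) (mconj (map (fun j => MNeg (MVar (o + j))) (seq 0 i))))) (seq 0 a)).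

Lemma tri_sem F V w o a D (P : world F -> Prop) :
  (forall f, msat F V w (D f) <-> exists v, P v /\ msat F V v f) ->
  (msat F V w (tri o a D) <-> forall i, i < a -> exists v, P v /\ V (o + i) v /\ forall j, j < i -> ~ V (o + j) v).
Proof.
  intros HD. unfold tri. rewrite msat_conj. split.
  - intros H i Hi. assert (Hin : In i (seq 0 a)) by (apply in_seq; lia).
    specialize (H _ (in_map _ _ _ Hin)). apply HD in H. destruct H as [v [Hv H]].
    apply msat_and in H. destruct H as [H1 H2]. rewrite msat_conj in H2.
    exists v; repeat split; auto. intros j Hj. 
    assert (Hjn : In j (seq 0 i)) by (apply in_seq; lia).
    exact (H2 _ (in_map (fun j => MNeg (MVar (o + j))) _ _ Hjn)).
  - intros H f Hf. apply in_map_iff in Hf. destruct Hf as [i [<- Hi]]. apply in_seq in Hi.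
    apply HD. destruct (H i ltac:(lia)) as [v [Hv [H1 H2]]]. exists v; split; auto.
    apply msat_and; split; auto. apply msat_conj. intros g Hg. apply in_map_iff in Hg.
    destruct Hg as [j [<- Hj]]. apply in_seq in Hj. simpl. apply H2; lia.
Qed.

Lemma wit_atl {X} (P : X -> Prop) (V : nat -> X -> Prop) o a :
  (forall i, i < a -> exists v, P v /\ V (o + i) v /\ forall j, j < i -> ~ V (o + j) v) -> atl P a.
Proof.
  intros H.
  assert (exists l, NoDup l /\ length l = a /\ forall x, In x l -> P x /\ exists j, j < a /\ V (o + j) x).
  { induction a as [|a IH].
    - exists []; split; [constructor|split; [reflexivity|intros ? []]].
    - destruct IH as [l [Hn [Hl Hp]]]. intros i Hi; apply H; lia.
      destruct (H a ltac:(lia)) as [v [Hv [H1 H2]]].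
      exists (v :: l); split; [|split].
      + constructor; auto. intro Hin. destruct (Hp v Hin) as [_ [j [Hj Hj2]]]. apply (H2 j); auto.
      + simpl; lia.
      + intros x [<-|Hx]; [split; auto; exists a; split; auto|].
        destruct (Hp x Hx) as [Hx1 [j [Hj Hj2]]]. split; auto. exists j; split; auto. }
  destruct H0 as [l [Hn [Hl Hp]]]. exists l; repeat split; auto. intros x Hx; apply Hp; auto.
Qed.

Definition Vl {X} (o : nat) (l : list X) (p : nat) (v : X) : Prop :=
  o <= p /\ p < o + length l /\ nth_error l (p - o) = Some v.

Lemma Vl_wit {X} (P : X -> Prop) (l : list X) o (V : nat -> X -> Prop) :
  NoDup l -> (forall x, In x l -> P x) ->
  (forall i v, i < length l -> (V (o + i) v <-> Vl o l (o + i) v)) ->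
  forall i, i < length l -> exists v, P v /\ V (o + i) v /\ forall j, j < i -> ~ V (o + j) v.
Proof.
  intros Hn Hp HV i Hi.
  destruct (nth_error l i) as [v|] eqn:E; [|apply nth_error_None in E; lia].
  exists v; split; [apply Hp; eapply nth_error_In; eauto|split].
  - apply HV; auto. unfold Vl. replace (o + i - o) with i by lia. repeat split; auto; lia.
  - intros j Hj Hv. apply HV in Hv; [|lia]. destruct Hv as [_ [_ Hv]].
    replace (o + j - o) with j in Hv by lia.
    rewrite NoDup_nth_error in Hn. assert (j = i) by (apply Hn; [lia|congruence]). lia.
Qed.

Lemma Vl_in {X} o (l : list X) p v : Vl o l p v -> In v l.
Proof. intros [_ [_ H]]. eapply nth_error_In; eauto. Qed.

Local Open Scope Z_scope.

Definition chi (a : nat) (b : Z) : mform :=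
  if b <? 0 then tri 0 a MDia
  else let bn := Z.to_nat b in
    MAnd (MAnd (MVar (a + bn)) (MBox (MNeg (MVar (a + bn)))))
      (MAnd (tri 0 a MDia) (MAnd (tri a bn (fun f => MDia (MDia f)))
         (mconj (map (fun l => MBox (MNeg (MVar (a + l)))) (seq 0 bn))))).

Definition DOM (F : frame) (w : world F) (a : nat) (b : Z) : Prop :=
  if b <? 0 then atl (rel F w) a
  else ~ rel F w w /\ atl (rel F w) a /\ atl (R2not F w) (Z.to_nat b).

Lemma chi_spec F w a b : (exists V, msat F V w (chi a b)) <-> DOM F w a b.
Proof.
  unfold chi, DOM. destruct (b <? 0).
  - split.
    + intros [V HV]. rewrite (tri_sem F V w 0 a MDia (rel F w)) in HV by apply msat_dia.
      eapply wit_atl; eauto.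
    + intros [l [Hn [Hl Hp]]]. exists (Vl 0 l).
      rewrite (tri_sem F _ w 0 a MDia (rel F w)) by apply msat_dia. subst a.
      apply Vl_wit; auto. tauto.
  - set (bn := Z.to_nat b). split.
    + intros [V HV]. rewrite !msat_and in HV. destruct HV as [[Hq Hbq] [Hp [Ho Hbo]]].
      rewrite (tri_sem F V w 0 a MDia (rel F w)) in Hp by apply msat_dia.
      rewrite (tri_sem F V w a bn (fun f => MDia (MDia f)) (R2 F w)) in Ho.
      2:{ intros f. rewrite msat_dia. split.
          - intros [z [Hz Hf]]. apply msat_dia in Hf. destruct Hf as [v [Hv Hf]]. exists v; split; auto. exists z; auto.
          - intros [v [[z [Hz Hzv]] Hf]]. exists z; split; auto. apply msat_dia. eauto. }
      rewrite msat_conj in Hbo. split; [|split].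
      * intro Hw. apply (Hbq w Hw Hq).
      * eapply wit_atl; eauto.
      * apply (wit_atl _ V a). intros i Hi. destruct (Ho i Hi) as [v [Hv [H1 H2]]].
        exists v; split; auto. split; auto. intro Hwv.
        assert (Hin : In i (seq 0 bn)) by (apply in_seq; lia).
        exact (Hbo _ (in_map (fun l => MBox (MNeg (MVar (a + l)))) _ _ Hin) v Hwv H1).
    + intros [Hw [[l1 [Hn1 [Hl1 Hp1]]] [l2 [Hn2 [Hl2 Hp2]]]]].
      set (V := fun p v => Vl 0 l1 p v \/ Vl a l2 p v \/ (p = (a + bn)%nat /\ v = w)).
      exists V.
      rewrite !msat_and. split; [split|split; [|split]].
      * simpl. right; right; auto.
      * simpl. intros v Hv [H|[H|[_ ->]]]; [destruct H as [_ [H _]]; simpl in H; lia|destruct H as [_ [H _]]; lia|auto].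
      * rewrite (tri_sem F V w 0 a MDia (rel F w)) by apply msat_dia. intros i Hi. subst a.
        apply (Vl_wit _ l1 0 V); auto. intros i' v Hi'. unfold V. split; [intros [H|[H|[H _]]]; auto; unfold Vl in H; lia|auto].
      * rewrite (tri_sem F _ w a bn (fun f => MDia (MDia f)) (R2 F w)).
        2:{ intros f. rewrite msat_dia. split.
          - intros [z [Hz Hf]]. apply msat_dia in Hf. destruct Hf as [v [Hv Hf]]. exists v; split; auto. exists z; auto.
          - intros [v [[z [Hz Hzv]] Hf]]. exists z; split; auto. apply msat_dia. eauto. }
        intros i Hi. rewrite <- Hl2 in Hi. apply (Vl_wit _ l2 a V); auto. intros x Hx; apply Hp2; auto.
        intros i' v Hi'. unfold V. split; [intros [H|[H|[H _]]]; auto; unfold Vl in H; lia|auto].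
      * apply msat_conj. intros f Hf. apply in_map_iff in Hf. destruct Hf as [i [<- Hi]].
        apply in_seq in Hi. simpl. intros v Hv. unfold V. intros [H|[H|[H _]]].
        -- unfold Vl in H; lia.
        -- apply Vl_in in H. apply (proj2 (Hp2 v H)); auto.
        -- lia.
Qed.
Local Open Scope nat_scope.

Lemma nth_inj {X} (l : list X) d i j : NoDup l -> i < length l -> j < length l -> nth i l d = nth j l d -> i = j.
Proof. intros Hn; rewrite NoDup_nth in Hn; eauto. Qed.

Lemma list_to_cluster M tyM (l : list (world M)) c (Hc : 1 <= c) :
  typed M tyM -> NoDup l -> length l = c -> (forall x, In x l -> tyM x = 1) ->
  forall psi, mvalid M psi -> mvalid (cluster c) psi.
Proof.
  intros HM Hn Hl Hp. destruct l as [|r l0] eqn:El; [simpl in Hl; lia|]. rewrite <- El in *.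
  set (iota := fun j : world (cluster c) => nth (proj1_sig j - 1) l r).
  apply (emb_valid _ _ tyM (tyC c) iota (fun _ => mkC c 1 Hc) HM (cl_typed c)).
  - intros a b H. apply sig_inj. unfold iota in H. apply nth_inj in H; auto.
    pose proof (proj2_sig a); pose proof (proj2_sig b); simpl in *; lia.
    pose proof (proj2_sig a); simpl in *; lia. pose proof (proj2_sig b); simpl in *; lia.
  - intros j. unfold tyC, iota. apply Hp. apply nth_In. pose proof (proj2_sig j); simpl in *; lia.
  - intros. unfold tyC in *; unfold Rt in *; lia.
  - intros. unfold tyC in *; unfold Rt in *; lia.
Qed.

Lemma list_to_fp M tyM (r : world M) (l1 l2 : list (world M)) c1 c2 (Hc : 1 <= c1) :
  typed M tyM -> tyM r = 0 -> NoDup l1 -> length l1 = c1 -> (forall x, In x l1 -> tyM x = 1) ->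
  NoDup l2 -> length l2 = c2 -> (forall x, In x l2 -> tyM x = 2) ->
  forall psi, mvalid M psi -> mvalid (flower_pos c1 c2) psi.
Proof.
  intros HM Hr Hn1 Hl1 Hp1 Hn2 Hl2 Hp2.
  set (iota := fun j : world (flower_pos c1 c2) =>
         let i := proj1_sig j in if i =? 0 then r else if i <=? c1 then nth (i - 1) l1 r else nth (i - c1 - 1) l2 r).
  assert (Hio : forall j, (proj1_sig j = 0 /\ iota j = r) \/
             (1 <= proj1_sig j <= c1 /\ iota j = nth (proj1_sig j - 1) l1 r /\ tyM (iota j) = 1) \/
             (c1 < proj1_sig j <= c1 + c2 /\ iota j = nth (proj1_sig j - c1 - 1) l2 r /\ tyM (iota j) = 2)).
  { intros j. unfold iota. pose proof (proj2_sig j). simpl in *.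
    destruct (proj1_sig j =? 0) eqn:E1; [apply Nat.eqb_eq in E1; auto|apply Nat.eqb_neq in E1].
    destruct (proj1_sig j <=? c1) eqn:E2; [apply Nat.leb_le in E2|apply Nat.leb_gt in E2]; right.
    - left; split; [lia|split; auto]. apply Hp1, nth_In; lia.
    - right; split; [lia|split; auto]. apply Hp2, nth_In; lia. }
  set (dflt := fun i => if i =? 0 then mkF c1 c2 0 else mkF c1 c2 1).
  assert (Hd : forall i, tyP c1 c2 (dflt i) = if i =? 0 then 0 else 1).
  { intros i; unfold dflt; destruct (i =? 0).
    - pose proof (tyP_spec c1 c2 (mkF c1 c2 0)); rewrite mkF_val in H; lia.
    - pose proof (tyP_spec c1 c2 (mkF c1 c2 1)); rewrite mkF_val in H; lia. }
  assert (Ht : forall j, tyM (iota j) = tyP c1 c2 j).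
  { intros j. pose proof (tyP_spec c1 c2 j).
    destruct (Hio j) as [[A1 A2]|[[A1 [A2 A3]]|[A1 [A2 A3]]]]; try rewrite A3; try rewrite A2; try rewrite Hr; lia. }
  apply (emb_valid _ _ tyM (tyP c1 c2) iota dflt HM (fp_typed c1 c2)); auto.
  - intros a b H. apply sig_inj.
    assert (Hab : tyP c1 c2 a = tyP c1 c2 b) by (rewrite <- !Ht, H; auto).
    pose proof (tyP_spec c1 c2 a); pose proof (tyP_spec c1 c2 b).
    destruct (Hio a) as [[A1 A2]|[[A1 [A2 A3]]|[A1 [A2 A3]]]];
    destruct (Hio b) as [[B1 B2]|[[B1 [B2 B3]]|[B1 [B2 B3]]]];
    first [lia | (rewrite A2, B2 in H; apply nth_inj in H; [lia|auto|lia|lia])].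
  - intros i j i' j' Hi Hj HR H1 H2. rewrite Hd in H1, H2. unfold Rt in *.
    destruct (i =? 0) eqn:E1; [apply Nat.eqb_eq in E1|apply Nat.eqb_neq in E1];
    destruct (j =? 0) eqn:E2; [apply Nat.eqb_eq in E2|apply Nat.eqb_neq in E2|apply Nat.eqb_eq in E2|apply Nat.eqb_neq in E2]; lia.
  - intros i i' k Hi H1 HR. rewrite Hd in H1. generalize dependent (tyP c1 c2 k); intros. unfold Rt in *.
    destruct (i =? 0) eqn:E1; [apply Nat.eqb_eq in E1|apply Nat.eqb_neq in E1]; lia.
Qed.
Open Scope Z_scope.

Lemma qd_qdd A : (qd A <= qdd A)%nat /\ (3 <= qdd A)%nat.
Proof. unfold qdd; lia. Qed.

Lemma profile (L : mform -> Prop) phi A F w :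
  (forall f, L f <-> K5plus phi f) -> sentence A -> FrL L F -> euclid F ->
  ((forall v, ~ rel F w v) /\ (fmodels (Gw F w) A <-> fmodels Dfr A))
  \/ ((exists v, rel F w v) /\ exists (c : nat) (n : Z),
        (1 <= c <= qdd A)%nat /\ -1 <= n <= Z.of_nat (qdd A) /\ mvalid (flower c n) phi /\
        (fmodels (Gw F w) A <-> fmodels (flower c n) A) /\
        forall a b, (1 <= a <= qdd A)%nat -> -1 <= b <= Z.of_nat (qdd A) ->
          (DOM F w a b <-> (a <= c)%nat /\ b <= n)).
Proof.
  intros HL HA HF HE.
  destruct (qd_qdd A) as [Hq1 Hq2]. set (Q := qdd A) in *.
  assert (HGphi : mvalid (Gw F w) phi) by (apply Gw_valid; auto; eapply FrL_phi; eauto).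
  destruct (trunc_ex (rel F w) Q) as [c [HcQ Hc]].
  destruct (classic (rel F w w)) as [Hw|Hw].
  -
    assert (Hc1 : (1 <= c)%nat).
    { apply Hc; [lia|]. exists [w]; split; [constructor; [intros []|constructor]|split; [reflexivity|]].
      intros x [<-|[]]; auto. }
    right. split; [exists w; auto|]. exists c, (-1). split; [lia|split; [lia|split; [|split]]].
    + rewrite flower_neg by lia.
      assert (Hct : cnt (Gw F w) (fun _ => 1%nat) 1 c).
      { apply Gw_cnt_refl; auto. apply Hc; lia. }
      destruct Hct as [l [Hn [Hl Hp]]].
      apply (list_to_cluster _ _ l c Hc1 (Gw_typed_refl F w HE Hw) Hn Hl Hp); auto.
    + destruct (flower_typed c (-1) Hc1 ltac:(lia)) as [ty [Ht [Hi Hcn]]].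
      apply (EF_sentence _ _ (fun _ => 1%nat) ty); auto using Gw_typed_refl, Gw_inhabited.
      intros t i Ht2 Hi2. rewrite Hcn, Gw_cnt_refl; auto. unfold NF, NC; simpl.
      destruct t as [|[|[|t]]]; simpl; try lia. apply Hc; lia.
    + intros a b Ha Hb. unfold DOM. destruct (b <? 0) eqn:E.
      * apply Z.ltb_lt in E. rewrite Hc by lia. lia.
      * apply Z.ltb_ge in E. split; [intros [H _]; contradiction|lia].
  - destruct (trunc_ex (R2not F w) Q) as [c2 [Hc2Q Hc2]].
    destruct (Nat.eq_dec c 0) as [Hc0|Hc0].
    + left. assert (Hd : forall v, ~ rel F w v).
      { intros v Hv. assert (H1 : (1 <= c)%nat); [|lia]. apply Hc; [lia|].
        exists [v]; split; [constructor; [intros []|constructor]|split; [reflexivity|]].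
        intros x [<-|[]]; auto. }
      split; auto.
      apply (EF_sentence _ _ (tyG F w) tyD); auto using Gw_typed_irr, Gw_inhabited, D_typed.
      constructor; exact tt.
      intros t i Ht2 Hi2. rewrite D_cnt, Gw_cnt_irr; auto.
      destruct t as [|[|[|t]]]; simpl; try lia.
      * rewrite atl_none; auto. lia.
      * rewrite atl_none. lia. intros x [[z [Hz _]] _]. apply (Hd z Hz).
    + right. assert (Hc1 : (1 <= c)%nat) by lia.
      split.
      { destruct (Hc 1%nat ltac:(lia)) as [_ H]. destruct (H ltac:(lia)) as [l [_ [Hl Hp]]].
        destruct l as [|v l]; [discriminate|]. exists v; apply Hp; simpl; auto. }
      exists c, (Z.of_nat c2). split; [lia|split; [lia|split; [|split]]].
      * rewrite flower_nneg by lia. rewrite Nat2Z.id.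
        assert (H1 : cnt (Gw F w) (tyG F w) 1 c) by (apply Gw_cnt_irr; auto; apply Hc; lia).
        assert (H2 : cnt (Gw F w) (tyG F w) 2 c2) by (apply Gw_cnt_irr; auto; apply Hc2; lia).
        destruct H1 as [l1 [Hn1 [Hl1 Hp1]]]. destruct H2 as [l2 [Hn2 [Hl2 Hp2]]].
        apply (list_to_fp _ _ (Gw_root F w) l1 l2 c c2 Hc1 (Gw_typed_irr F w HE Hw)); auto.
        destruct (tyG_spec F w (Gw_root F w)) as [[? ?]|[[? [? ?]]|[? [? ?]]]]; auto; simpl in *; congruence.
      * destruct (flower_typed c (Z.of_nat c2) Hc1 ltac:(lia)) as [ty [Ht [Hi Hcn]]].
        apply (EF_sentence _ _ (tyG F w) ty); auto using Gw_typed_irr, Gw_inhabited.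
        intros t i Ht2 Hi2. rewrite Hcn, Gw_cnt_irr; auto. unfold NF.
        replace (Z.of_nat c2 <? 0) with false by (symmetry; apply Z.ltb_ge; lia).
        rewrite Nat2Z.id.
        destruct t as [|[|[|t]]]; simpl; try lia. apply Hc; lia. apply Hc2; lia.
      * intros a b Ha Hb. unfold DOM. destruct (b <? 0) eqn:E.
        -- apply Z.ltb_lt in E. rewrite Hc by lia. lia.
        -- apply Z.ltb_ge in E. rewrite Hc by lia. rewrite Hc2 by lia. split; [intros [_ H]; lia|].
           intros H; split; auto. lia.
Qed.
Open Scope Z_scope.

Lemma fsat_iff F g a b : fsat F g (FIff a b) <-> (fsat F g a <-> fsat F g b).
Proof.
  unfold FIff, FAnd, FImp; simpl.
  destruct (classic (fsat F g a)); destruct (classic (fsat F g b)); tauto.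
Qed.

Lemma psi_ex (T : list (nat * Z)) (bad : nat -> Z -> Prop) :
  exists psi, forall F V w, msat F V w psi <-> forall a b, In (a, b) T -> bad a b -> ~ msat F V w (chi a b).
Proof.
  induction T as [|[a b] T IH].
  - exists MTop; simpl; intros; split; auto.
  - destruct IH as [psi Hpsi]. destruct (classic (bad a b)) as [Hb|Hb].
    + exists (MAnd (MNeg (chi a b)) psi). intros F V w. rewrite msat_and, Hpsi. simpl. split.
      * intros [H1 H2] a' b' [E|Hin] Hb'; [inversion E; subst; auto|auto].
      * intros H; split; [apply H; auto|intros; apply H; auto].
    + exists psi. intros F V w. rewrite Hpsi. simpl. split.
      * intros H a' b' [E|Hin] Hb'; [inversion E; subst; contradiction|auto].
      * intros H a' b' Hin; apply H; auto.
Qed.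

Definition Tlist (Q : nat) : list (nat * Z) :=
  list_prod (seq 1 Q) (map (fun j => Z.of_nat j - 1) (seq 0 (Q + 2))).

Lemma Tlist_in Q a b : In (a, b) (Tlist Q) <-> (1 <= a <= Q)%nat /\ -1 <= b <= Z.of_nat Q.
Proof.
  unfold Tlist. rewrite in_prod_iff, in_seq, in_map_iff. split.
  - intros [H1 [j [<- Hj]]]. apply in_seq in Hj. lia.
  - intros [H1 H2]. split; [lia|]. exists (Z.to_nat (b + 1)). split; [lia|]. apply in_seq. lia.
Qed.

Ltac nf_solve t := unfold NF, NC, NP in *;
  repeat match goal with
  | |- context [?n <? 0] => first [rewrite (proj2 (Z.ltb_lt n 0)) by lia | rewrite (proj2 (Z.ltb_ge n 0)) by lia | destruct (Z.ltb_spec n 0)]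
  end;
  destruct t as [|[|[|t]]]; simpl; lia.

Lemma flower_FrL (L : mform -> Prop) phi (m : nat) (n : Z) : (forall f, L f <-> K5plus phi f) ->
  (1 <= m)%nat -> -1 <= n -> mvalid (flower m n) phi -> FrL L (flower m n).
Proof.
  intros HL Hm Hn Hp. destruct (flower_typed m n Hm Hn) as [_ [_ [Hi _]]].
  apply (FrL_intro L phi); auto using flower_euclid.
Qed.

Lemma Gw_FrL L F w : FrL L F -> euclid F -> FrL L (Gw F w).
Proof. intros [_ HF] HE; split; [apply Gw_inhabited|]. intros f Hf; apply Gw_valid; auto. Qed.

Theorem lemma55 (L : mform -> Prop) (phi : mform) (k : nat) :
  euclidean_logic L ->
  (exists l : list (nat * Z), forall m n, S_L_core L m n -> In (m, n) l) ->
  (forall f, L f <-> K5plus phi f) ->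
  k_bound L k ->
  (forall k', k_bound L k' -> (k <= k')%nat) ->
  forall (A : fo) (x : nat),
    sentence A -> ~ occurs x A ->
    (modally_definable (FrL L) A <->
     (in_Th (FrL L) (FIff A (FAll x (tau x A))) /\
      forall (m m' : nat) (n n' : Z),
        (1 <= m)%nat -> (1 <= m')%nat -> -1 <= n -> -1 <= n' ->
        mvalid (flower m n) phi ->
        Pi k A m n ->
        (m' <= m)%nat -> n' <= n ->
        fmodels (flower m n) A ->
        fmodels (flower m' n') A)).
Proof.
  intros HEL _ HL Hk _ A x HA Hoc.
  destruct (qd_qdd A) as [Hq1 Hq2].
  split.
  - intros [psi Hpsi]. split.
    + intros G HG g. apply fsat_iff.
      assert (HE : euclid G) by (eapply FrL_euclid; eauto).
      rewrite sentence_fmodels by auto. rewrite tau_all by auto.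
      rewrite <- Hpsi by auto. split.
      * intros H w. apply Hpsi; [apply Gw_FrL; auto|]. apply Gw_valid; auto.
      * intros H. apply Gw_valid_back; auto. intros w. apply Hpsi; [apply Gw_FrL; auto|]. auto.
    + intros m m' n n' Hm Hm' Hn Hn' Hphi _ Hmm Hnn HAm.
      assert (Hf : FrL L (flower m n)) by (apply (flower_FrL L phi); auto).
      assert (Hf' : FrL L (flower m' n')).
      { apply (flower_FrL L phi); auto. apply (flower_pmorph m m' n n'); auto. }
      apply Hpsi; auto. apply (flower_pmorph m m' n n'); auto. apply Hpsi; auto.
  - intros [Hth Hmon].
    set (Q := qdd A) in *.
    assert (MON : forall (m m' : nat) (n n' : Z), (1 <= m')%nat -> (m' <= m)%nat -> -1 <= n' -> n' <= n ->
              mvalid (flower m n) phi -> fmodels (flower m n) A -> fmodels (flower m' n') A).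
    { intros m m' n n' Hm' Hmm Hn' Hnn Hphi HAm.
      destruct (classic (Pi k A m n)) as [HPi|HPi].
      - apply (Hmon m m' n n'); auto; lia.
      - assert (Hcase : ((2 <= m)%nat /\ 2 <= n /\ Z.of_nat m + n > Z.of_nat k) \/
                        (m = 1%nat /\ n > Z.of_nat Q) \/ (-1 <= n <= 1 /\ (m > Q)%nat)).
        { unfold Pi in HPi. fold Q in HPi. lia. }
        destruct Hcase as [[H1 [H2 H3]]|[[H1 H2]|[H1 H2]]].
        + exfalso. destruct Hk as [_ Hk].
          assert (Z.of_nat m + n <= Z.of_nat k); [|lia].
          apply Hk; try lia. split; [split; [lia|split; [lia|]]|split; lia].
          intros f Hf. eapply sound; eauto using flower_euclid.
        + subst m. assert (m' = 1%nat) by lia. subst m'.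
          assert (HsA : fmodels (flower 1 (Z.of_nat Q)) A).
          { apply (flower_EF 1 1 n (Z.of_nat Q) A); auto; try lia.
            intros t i Ht Hi. nf_solve t. }
          assert (Hsphi : mvalid (flower 1 (Z.of_nat Q)) phi) by (apply (flower_pmorph 1 1 n); auto; lia).
          destruct (Z_le_gt_dec n' (Z.of_nat Q)) as [Hn'Q|Hn'Q].
          * apply (Hmon 1%nat 1%nat (Z.of_nat Q) n'); auto; try lia.
            unfold Pi; fold Q; lia.
          * apply (flower_EF 1 1 (Z.of_nat Q) n' A); auto; try lia.
            intros t i Ht Hi. nf_solve t.
        + assert (HsA : fmodels (flower Q n) A).
          { apply (flower_EF m Q n n A); auto; try lia.
            intros t i Ht Hi. nf_solve t. }
          assert (Hsphi : mvalid (flower Q n) phi) by (apply (flower_pmorph m Q n n); auto; lia).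
          assert (HPis : forall n'', -1 <= n'' <= 1 -> Pi k A Q n'').
          { intros n'' Hn''. unfold Pi; fold Q; lia. }
          destruct (le_gt_dec m' Q) as [Hm'Q|Hm'Q].
          * apply (Hmon Q m' n n'); auto; try lia.
          * assert (fmodels (flower Q n') A) by (apply (Hmon Q Q n n'); auto; lia).
            apply (flower_EF Q m' n' n' A); auto; try lia.
            intros t i Ht Hi. nf_solve t. }
    set (bad := fun a b => mvalid (flower a b) phi /\ ~ fmodels (flower a b) A).
    destruct (psi_ex (Tlist Q) bad) as [psi0 Hpsi0].
    assert (Hpsi : exists psi, forall F V w, msat F V w psi <->
               msat F V w psi0 /\ (~ fmodels Dfr A -> exists v, rel F w v)).
    { destruct (classic (fmodels Dfr A)) as [HD|HD].
      - exists psi0; intros; tauto.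
      - exists (MAnd psi0 (MDia MTop)). intros F V w. rewrite msat_and, msat_dia. simpl.
        split; [intros [H1 [v [Hv _]]]; split; eauto|intros [H1 H2]; split; auto].
        destruct (H2 HD) as [v Hv]; eauto. }
    destruct Hpsi as [psi Hpsi].
    exists psi. intros G HG.
    assert (HE : euclid G) by (eapply FrL_euclid; eauto).
    assert (Hw : forall w, (forall V, msat G V w psi) <-> fmodels (Gw G w) A).
    { intros w. 
      assert (Hchi : forall a b, (forall V, ~ msat G V w (chi a b)) <-> ~ DOM G w a b).
      { intros a b. rewrite <- chi_spec. split; [intros H [V HV]; apply (H V HV)|intros H V HV; apply H; eauto]. }
      destruct (profile L phi A G w HL HA HG HE) as [[Hd HGD]|[[v Hv] [c [n [Hc [Hn [Hphi [HGA Hdom]]]]]]]].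
      - rewrite HGD. split.
        + intros H. apply NNPP; intro HD. destruct (proj2 (proj1 (Hpsi _ _ _) (H (fun _ _ => False))) HD) as [v Hv].
          apply (Hd v Hv).
        + intros HD V. apply Hpsi. split; [|intros H; contradiction].
          apply Hpsi0. intros a b Hin _ Hm. apply Tlist_in in Hin.
          assert (HDOM : DOM G w a b) by (apply chi_spec; eauto).
          unfold DOM in HDOM. destruct (b <? 0); [|destruct HDOM as [_ [HDOM _]]];
          destruct HDOM as [l [_ [Hl Hp]]]; destruct l as [|u l]; simpl in Hl; try lia;
          apply (Hd u), Hp; simpl; auto.
      - rewrite HGA. split.
        + intros H. apply NNPP; intro HnA.
          assert (Hb : bad c n) by (split; auto).
          assert (Hin : In (c, n) (Tlist Q)) by (apply Tlist_in; lia).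
          apply (Hchi c n); [|apply Hdom; lia].
          intros V. exact (proj1 (Hpsi0 G V w) (proj1 (proj1 (Hpsi G V w) (H V))) c n Hin Hb).
        + intros HcA V. apply Hpsi. split; [|intros _; eauto].
          apply Hpsi0. intros a b Hin [Hbp Hbn]. apply Tlist_in in Hin.
          revert V. apply Hchi. rewrite Hdom by lia. intros [Ha Hb].
          apply Hbn. apply (MON c a n b); auto; lia. }
    destruct (proj1 HG) as [g0]. pose proof HG as HG'.
    rewrite <- (sentence_fmodels G A (fun _ => g0) HA).
    rewrite (proj1 (fsat_iff _ _ _ _) (Hth G HG' (fun _ => g0))).
    rewrite tau_all by auto. split.
    + intros H w. apply Hw. intros V; apply H.
    + intros H V w. apply Hw, H.
Qed.
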